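(* Let $\Phi_1,\Phi_2,\Phi_3,\Psi_1,\Psi_2,\Psi_3:\mathbb{Z}^3\to\mathbb{Q}$ be the functions defined in the context. (a) For all integers $a,b,c$ and each $i\in\{1,2,3\}$, \[ \Phi_i(a,b,c)\,\Phi_i(a-2,b-3,c-2)=\Phi_i(a-1,b-1,c)\,\Phi_i(a-1,b-2,c-2)+\Phi_i(a-2,b-2,c-1)\,\Phi_i(a,b-1,c-1) \] and \[ \Psi_i(a,b,c)\,\Psi_i(a-2,b-3,c-2)=\Psi_i(a-1,b-1,c)\,\Psi_i(a-1,b-2,c-2)+\Psi_i(a-2,b-2,c-1)\,\Psi_i(a,b-1,c-1). \] (b) For all integers $a,b,c$ and each $i\in\{1,2,3\}$, \[ \Phi_i(a,b,c)\,\Phi_i(a-2,b-3,c-2)=\Psi_{4-i}(c,b-1,a-1)\,\Phi_i(a-1,b-2,c-2)+\Phi_i(a-2,b-2,c-1)\,\Phi_i(a,b-1,c-1) \] and \[ \Psi_i(a,b,c)\,\Psi_i(a-2,b-3,c-2)=\Phi_{4-i}(c,b-1,a-1)\,\Psi_i(a-1,b-2,c-2)+\Psi_i(a-2,b-2,c-1)\,\Psi_i(a,b-1,c-1). \]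
   Context: For integers $a,b,c$ define $g(a,b,c)=(b-a)(b-c)+\left\lfloor\frac{(a-c)^2}{3}\right\rfloor$, $q(a,b,c)=\left\lfloor\frac{(a-b+c)^2}{4}\right\rfloor$, $\alpha(a,b,c)=2$ if $3b+a-c\equiv 1\pmod 6$, $\alpha(a,b,c)=3$ if $3b+a-c\equiv 5\pmod 6$, and $\alpha(a,b,c)=1$ otherwise; $\beta(a,b,c)=3$ if $3b+a-c\equiv 1\pmod 6$, $\beta(a,b,c)=2$ if $3b+a-c\equiv 5\pmod 6$, and $\beta(a,b,c)=1$ otherwise. Writing $g=g(a,b,c)$, $q=q(a,b,c)$ and $r=\lfloor (a-c+1)/3\rfloor$, define (exponents may be negative, so values are rational) $\Phi_1(a,b,c)=\alpha(a,b,c)\,2^{g(a,b,c+1)}5^{g}11^{q}$, $\Phi_2(a,b,c)=\alpha(a,b,c)\,2^{g(a,b,c-1)-r+(a-b)}5^{g}11^{q}$, $\Phi_3(a,b,c)=\alpha(a,b,c)\,2^{g(a,b,c-1)-r}5^{g}11^{q}$, $\Psi_1(a,b,c)=\beta(a,b,c)\,2^{g(a,b,c-1)}5^{g}11^{q}$, $\Psi_2(a,b,c)=\beta(a,b,c)\,2^{g(a,b,c+1)+r-(a-b)}5^{g}11^{q}$, $\Psi_3(a,b,c)=\beta(a,b,c)\,2^{g(a,b,c+1)+r}5^{g}11^{q}$. *)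

(* Defs.v *)
From HB Require Import structures.
From mathcomp Require Import all_boot all_order all_algebra.
Set Implicit Arguments. Unset Strict Implicit. Unset Printing Implicit Defensive.
Import Order.TTheory GRing.Theory Num.Theory.
Local Open Scope ring_scope.

(* Integer floor division by a positive constant: intdiv's (m %/ d)%Z with
   d > 0 is the floor of m/d (remainder (m %% d)%Z is in [0,d)). *)

Definition g (a b c : int) : int := (b - a) * (b - c) + (((a - c) ^+ 2) %/ 3)%Z.
Definition q (a b c : int) : int := (((a - b + c) ^+ 2) %/ 4)%Z.
Definition r (a c : int) : int := ((a - c + 1) %/ 3)%Z.

Definition alpha (a b c : int) : rat :=
  if ((3 * b + a - c) %% 6)%Z == 1 then 2
  else if ((3 * b + a - c) %% 6)%Z == 5 then 3 else 1.
Definition beta (a b c : int) : rat :=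
  if ((3 * b + a - c) %% 6)%Z == 1 then 3
  else if ((3 * b + a - c) %% 6)%Z == 5 then 2 else 1.

Definition common (a b c : int) : rat :=
  (5%:Q) ^ (g a b c) * (11%:Q) ^ (q a b c).

(* Phi i for i = 1,2,3 (value 0 for other i, never used) *)
Definition Phi (i : nat) (a b c : int) : rat :=
  match i with
  | 1 => alpha a b c * (2%:Q) ^ (g a b (c + 1)) * common a b c
  | 2 => alpha a b c * (2%:Q) ^ (g a b (c - 1) - r a c + (a - b)) * common a b c
  | 3 => alpha a b c * (2%:Q) ^ (g a b (c - 1) - r a c) * common a b c
  | _ => 0
  end.

Definition Psi (i : nat) (a b c : int) : rat :=
  match i with
  | 1 => beta a b c * (2%:Q) ^ (g a b (c - 1)) * common a b c
  | 2 => beta a b c * (2%:Q) ^ (g a b (c + 1) + r a c - (a - b)) * common a b c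
  | 3 => beta a b c * (2%:Q) ^ (g a b (c + 1) + r a c) * common a b c
  | _ => 0
  end.

(* Main.v *)
Require Import Defs.
From HB Require Import structures.
From mathcomp Require Import all_boot all_order all_algebra zify ring.
Import Order.TTheory GRing.Theory Num.Theory.
Local Open Scope ring_scope.

Lemma prodE (k k' : rat) (E E' G G' Q Q' : int) :
  (k * (2%:Q) ^ E * ((5%:Q) ^ G * (11%:Q) ^ Q)) * (k' * (2%:Q) ^ E' * ((5%:Q) ^ G' * (11%:Q) ^ Q'))
  = k * k' * (2%:Q) ^ (E + E') * (5%:Q) ^ (G + G') * (11%:Q) ^ (Q + Q').
Proof. rewrite !expfzDr //.
set x1 := (2%:Q) ^ E. set x2 := (2%:Q) ^ E'.
set y1 := (5%:Q) ^ G. set y2 := (5%:Q) ^ G'.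
set z1 := (11%:Q) ^ Q. set z2 := (11%:Q) ^ Q'.
ring. Qed.

Lemma key (k0 k0' k1 k1' k2 k2' : rat)
  (E0 E0' E1 E1' E2 E2' G0 G0' G1 G1' G2 G2' Q0 Q0' Q1 Q1' Q2 Q2' : int) :
  Q1 + Q1' = Q0 + Q0' -> Q2 + Q2' = Q0 + Q0' ->
  k0 * k0' = k1 * k1' * (2%:Q) ^ (E1 + E1' - (E0 + E0')) * (5%:Q) ^ (G1 + G1' - (G0 + G0'))
           + k2 * k2' * (2%:Q) ^ (E2 + E2' - (E0 + E0')) * (5%:Q) ^ (G2 + G2' - (G0 + G0')) ->
  (k0 * (2%:Q) ^ E0 * ((5%:Q) ^ G0 * (11%:Q) ^ Q0)) * (k0' * (2%:Q) ^ E0' * ((5%:Q) ^ G0' * (11%:Q) ^ Q0'))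
  = (k1 * (2%:Q) ^ E1 * ((5%:Q) ^ G1 * (11%:Q) ^ Q1)) * (k1' * (2%:Q) ^ E1' * ((5%:Q) ^ G1' * (11%:Q) ^ Q1'))
  + (k2 * (2%:Q) ^ E2 * ((5%:Q) ^ G2 * (11%:Q) ^ Q2)) * (k2' * (2%:Q) ^ E2' * ((5%:Q) ^ G2' * (11%:Q) ^ Q2')).
Proof.
have pw : forall (x : rat) (m n : int), x != 0 -> x ^ m = x ^ (m - n) * x ^ n.
  by move=> x m n hx; rewrite -expfzDr //; congr (_ ^ _); ring.
move=> h1 h2 hk; rewrite !prodE h1 h2 hk.
rewrite [2%:Q ^ (E1 + E1')](pw _ _ (E0 + E0')) // [2%:Q ^ (E2 + E2')](pw _ _ (E0 + E0')) //.
rewrite [5%:Q ^ (G1 + G1')](pw _ _ (G0 + G0')) // [5%:Q ^ (G2 + G2')](pw _ _ (G0 + G0')) //.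
set A := (2%:Q) ^ (E1 + E1' - _). set B := (5%:Q) ^ (G1 + G1' - _).
set C := (2%:Q) ^ (E2 + E2' - _). set D := (5%:Q) ^ (G2 + G2' - _).
set X := (2%:Q) ^ (E0 + E0'). set Y := (5%:Q) ^ (G0 + G0'). set Z := (11%:Q) ^ _.
ring.
Qed.

Lemma alpha0 a b c : ((3 * b + a - c) %% 6)%Z = 0 -> alpha a b c = 1. Proof. by rewrite /alpha => ->. Qed.
Lemma alpha1 a b c : ((3 * b + a - c) %% 6)%Z = 1 -> alpha a b c = 2. Proof. by rewrite /alpha => ->. Qed.
Lemma alpha2 a b c : ((3 * b + a - c) %% 6)%Z = 2 -> alpha a b c = 1. Proof. by rewrite /alpha => ->. Qed.
Lemma alpha3 a b c : ((3 * b + a - c) %% 6)%Z = 3 -> alpha a b c = 1. Proof. by rewrite /alpha => ->. Qed.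
Lemma alpha4 a b c : ((3 * b + a - c) %% 6)%Z = 4 -> alpha a b c = 1. Proof. by rewrite /alpha => ->. Qed.
Lemma alpha5 a b c : ((3 * b + a - c) %% 6)%Z = 5 -> alpha a b c = 3. Proof. by rewrite /alpha => ->. Qed.
Lemma beta0 a b c : ((3 * b + a - c) %% 6)%Z = 0 -> beta a b c = 1. Proof. by rewrite /beta => ->. Qed.
Lemma beta1 a b c : ((3 * b + a - c) %% 6)%Z = 1 -> beta a b c = 3. Proof. by rewrite /beta => ->. Qed.
Lemma beta2 a b c : ((3 * b + a - c) %% 6)%Z = 2 -> beta a b c = 1. Proof. by rewrite /beta => ->. Qed.
Lemma beta3 a b c : ((3 * b + a - c) %% 6)%Z = 3 -> beta a b c = 1. Proof. by rewrite /beta => ->. Qed.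
Lemma beta4 a b c : ((3 * b + a - c) %% 6)%Z = 4 -> beta a b c = 1. Proof. by rewrite /beta => ->. Qed.
Lemma beta5 a b c : ((3 * b + a - c) %% 6)%Z = 5 -> beta a b c = 2. Proof. by rewrite /beta => ->. Qed.

Ltac evk :=
  repeat match goal with
  | |- context [alpha ?X ?Y ?Z] =>
    first [ rewrite (@alpha0 X Y Z); last by lia
          | rewrite (@alpha1 X Y Z); last by lia
          | rewrite (@alpha2 X Y Z); last by lia
          | rewrite (@alpha3 X Y Z); last by lia
          | rewrite (@alpha4 X Y Z); last by lia
          | rewrite (@alpha5 X Y Z); last by lia ]
  | |- context [beta ?X ?Y ?Z] =>
    first [ rewrite (@beta0 X Y Z); last by lia
          | rewrite (@beta1 X Y Z); last by lia
          | rewrite (@beta2 X Y Z); last by lia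
          | rewrite (@beta3 X Y Z); last by lia
          | rewrite (@beta4 X Y Z); last by lia
          | rewrite (@beta5 X Y Z); last by lia ]
  end.

Ltac eve :=
  repeat match goal with
  | |- context [(?x : rat) ^ (?e : int)] =>
    lazymatch e with
    | 0 => fail
    | -1 => fail
    | _ => first [ have -> : e = 0 by rewrite /g /q /r; lia
                 | have -> : e = -1 by rewrite /g /q /r; lia ]
    end
  end.

Lemma split6 (P : int -> int -> int -> Prop) :
  (forall m, (0 <= m < 6)%R -> forall u b c, P (u * 6 + m - 3 * b + c) b c) ->
  forall a b c, P a b c.
Proof.
move=> H a b c.
have ha : a = ((3*b+a-c) %/ 6)%Z * 6 + ((3*b+a-c) %% 6)%Z - 3 * b + c by lia.
rewrite ha; apply: H; lia.
Qed.

Ltac solve_case :=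
  rewrite /common;
  apply: key; [ rewrite /q; lia | rewrite /q; lia | evk; eve; by apply/eqP; vm_compute ].

Lemma partA (i : nat) : (1 <= i <= 3)%N -> forall a b c : int,
    Phi i a b c * Phi i (a - 2) (b - 3) (c - 2) =
      Phi i (a - 1) (b - 1) c * Phi i (a - 1) (b - 2) (c - 2)
      + Phi i (a - 2) (b - 2) (c - 1) * Phi i a (b - 1) (c - 1).
Proof.
move=> hi; apply: split6 => m hm u b c.
have : m = 0 \/ m = 1 \/ m = 2 \/ m = 3 \/ m = 4 \/ m = 5 by lia.
case: i hi => [|[|[|[|i]]]] // _;
move=> [->|[->|[->|[->|[->|->]]]]]; rewrite /Phi; solve_case.
Qed.

Lemma partB (i : nat) : (1 <= i <= 3)%N -> forall a b c : int,
    Psi i a b c * Psi i (a - 2) (b - 3) (c - 2) =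
      Psi i (a - 1) (b - 1) c * Psi i (a - 1) (b - 2) (c - 2)
      + Psi i (a - 2) (b - 2) (c - 1) * Psi i a (b - 1) (c - 1).
Proof.
move=> hi; apply: split6 => m hm u b c.
have : m = 0 \/ m = 1 \/ m = 2 \/ m = 3 \/ m = 4 \/ m = 5 by lia.
case: i hi => [|[|[|[|i]]]] // _;
move=> [->|[->|[->|[->|[->|->]]]]]; rewrite /Psi; solve_case.
Qed.

Lemma symm (i : nat) : (1 <= i <= 3)%N -> forall a b c : int,
  Psi (4 - i) c b a = Phi i a b c /\ Phi (4 - i) c b a = Psi i a b c.
Proof.
move=> hi; apply: split6 => m hm u b c.
have : m = 0 \/ m = 1 \/ m = 2 \/ m = 3 \/ m = 4 \/ m = 5 by lia.
case: i hi => [|[|[|[|i]]]] // _;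
move=> [->|[->|[->|[->|[->|->]]]]]; rewrite /Psi /Phi /= /common; split; evk;
  congr (_ * _ * (_ * _)); congr (_ ^ _); rewrite /g /q /r; lia.
Qed.

Theorem lemma4p3 :
  forall (i : nat), (1 <= i <= 3)%N -> forall a b c : int,
    (* (a) *)
    Phi i a b c * Phi i (a - 2) (b - 3) (c - 2) =
      Phi i (a - 1) (b - 1) c * Phi i (a - 1) (b - 2) (c - 2)
      + Phi i (a - 2) (b - 2) (c - 1) * Phi i a (b - 1) (c - 1) /\
    Psi i a b c * Psi i (a - 2) (b - 3) (c - 2) =
      Psi i (a - 1) (b - 1) c * Psi i (a - 1) (b - 2) (c - 2)
      + Psi i (a - 2) (b - 2) (c - 1) * Psi i a (b - 1) (c - 1) /\
    (* (b) *)
    Phi i a b c * Phi i (a - 2) (b - 3) (c - 2) =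
      Psi (4 - i) c (b - 1) (a - 1) * Phi i (a - 1) (b - 2) (c - 2)
      + Phi i (a - 2) (b - 2) (c - 1) * Phi i a (b - 1) (c - 1) /\
    Psi i a b c * Psi i (a - 2) (b - 3) (c - 2) =
      Phi (4 - i) c (b - 1) (a - 1) * Psi i (a - 1) (b - 2) (c - 2)
      + Psi i (a - 2) (b - 2) (c - 1) * Psi i a (b - 1) (c - 1).
Proof.
move=> i hi a b c.
have [s1 s2] := @symm i hi (a - 1) (b - 1) c.
rewrite s1 s2; split; first exact: partA.
split; first exact: partB.
split; [exact: partA | exact: partB].
Qed.
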